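(* Let $n$ be a positive integer and $(\alpha,\beta)\in\{(0,0),(1,0),(1,1),(2,1),(3,1),(3,2),(4,2)\}$. Let \[ w_{n,\alpha,\beta}=b^{n+1}(ab)^n b^{2n+1+\alpha}a^{2n+1+\beta}. \] Then $S_d(w_{n,\alpha,\beta})\ge 3n+1+\left\lfloor\frac{\alpha+\beta}{3}\right\rfloor$.
   Context: A word is a finite word over the two-letter alphabet $\{a,b\}$, written multiplicatively (so $x^m$ is the concatenation of $m$ copies of $x$). A word $w=a_1\cdots a_n$ is a palindrome if $a_i=a_{n-i+1}$ for all $i\le n$, and an antipalindrome if $a_i\neq a_{n-i+1}$ for all $i\le n$. For a word $w$, $S_d(w)$ is the minimal number of letters of $w$ whose deletion from $w$ yields a palindrome or an antipalindrome. $\lfloor x\rfloor$ denotes the integer part of $x$. *)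

(* Defs.v *)
From HB Require Import structures.
From mathcomp Require Import all_boot.
Set Implicit Arguments. Unset Strict Implicit. Unset Printing Implicit Defensive.

Inductive letter := La | Lb.
Definition letter_eqb (x y : letter) : bool :=
  match x, y with La, La | Lb, Lb => true | _, _ => false end.
Lemma letter_eqP : Equality.axiom letter_eqb.
Proof. by case; case; constructor. Qed.
HB.instance Definition _ := hasDecEq.Build letter letter_eqP.

Definition word := seq letter.

Definition wpow (x : word) (m : nat) : word := flatten (nseq m x).

Definition is_palindrome (w : word) : bool :=
  all (fun i => nth La w i == nth La w (size w - i.+1)) (iota 0 (size w)).
Definition is_antipalindrome (w : word) : bool :=
  all (fun i => nth La w i != nth La w (size w - i.+1)) (iota 0 (size w)).

(* Words obtained from w by deleting letters = mask m w, m a bitseq of length |w|.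
   S_d(w) = minimal number of deleted letters yielding a palindrome or antipalindrome
   (the empty word is a palindrome, so the minimum exists). *)
Definition Sd (w : word) : nat :=
  \big[minn/size w]_(t : (size w).-tuple bool
        | is_palindrome (mask t w) || is_antipalindrome (mask t w))
     (size w - size (mask t w)).

Definition w_nab (n al be : nat) : word :=
  wpow [:: Lb] n.+1 ++ wpow [:: La; Lb] n ++ wpow [:: Lb] (2*n + 1 + al)
  ++ wpow [:: La] (2*n + 1 + be).

(* Main.v *)
Require Import Defs.
From mathcomp Require Import all_boot.
From mathcomp Require Import zify.

Set Implicit Arguments. Unset Strict Implicit. Unset Printing Implicit Defensive.

Definition compl (x : letter) := if x is La then Lb else La.

Fixpoint cnt (x : letter) (s : word) : nat :=
  if s is y :: s' then (y == x) + cnt x s' else 0.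

Lemma cnt_cat x (s t : word) : cnt x (s ++ t) = cnt x s + cnt x t.
Proof. by elim: s => [|y s IH] //=; rewrite IH addnA. Qed.

Lemma cnt_nseq x y d : cnt x (nseq d y) = (y == x) * d.
Proof. elim: d => [|d IH] /=; [by rewrite muln0 | rewrite IH mulnS //]. Qed.

Lemma cnt_rev x (s : word) : cnt x (rev s) = cnt x s.
Proof. elim: s => [|y s IH] //=; rewrite rev_cons -cats1 cnt_cat IH /=; lia. Qed.

Fixpoint lead (x : letter) (s : word) : nat :=
  if s is y :: s' then (if y == x then (lead x s').+1 else 0) else 0.

Lemma lead_cat x (s t : word) : lead x (s ++ t) =
  if all (pred1 x) s then size s + lead x t else lead x s.
Proof.
elim: s => [|y s IH] //=; case: (y == x) => //=; rewrite IH; by case: (all _ _).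
Qed.

Lemma lead_all x (s : word) : all (pred1 x) s -> lead x s = size s.
Proof. by elim: s => [|y s IH] //= /andP[-> /IH ->]. Qed.

Lemma lead_nseq x d (s : word) : lead x (nseq d x ++ s) = d + lead x s.
Proof. by elim: d => [|d IH] //=; rewrite eqxx IH. Qed.

Lemma allb_countA (s : word) : all (pred1 Lb) s -> cnt La s = 0.
Proof. by elim: s => [|y s IH] //= /andP[/eqP -> /IH ->]. Qed.

Lemma alla_countB (s : word) : all (pred1 La) s -> cnt Lb s = 0.
Proof. by elim: s => [|y s IH] //= /andP[/eqP -> /IH ->]. Qed.

Lemma size_count (s : word) : size s = cnt La s + cnt Lb s.
Proof. elim: s => [|[] s IH] //=; rewrite IH /=; lia. Qed.

Lemma count_compl (s : word) : cnt La (map compl s) = cnt Lb s.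
Proof. by elim: s => [|[] s IH] //=; rewrite IH. Qed.

Lemma subseq_consE (q : word) y r : subseq q (y :: r) ->
  q = [::] \/ (exists q', q = y :: q' /\ subseq q' r) \/ subseq q r.
Proof.
case: q => [|x q]; first by left.
rewrite /=; case: eqP => [->|_] H; right; [left; by exists q | by right].
Qed.

Lemma subseq_catE (p u v : word) : subseq p (u ++ v) ->
  exists p1 p2, [/\ p = p1 ++ p2, subseq p1 u & subseq p2 v].
Proof.
case/subseqP => t ht ->.
rewrite -(cat_take_drop (size u) t) mask_cat; last first.
  by rewrite size_takel // ht size_cat leq_addr.
by exists (mask (take (size u) t) u), (mask (drop (size u) t) v); split; rewrite ?mask_subseq.
Qed.

Lemma subseq_nseq (p : word) k x : subseq p (nseq k x) ->
  p = nseq (size p) x /\ size p <= k.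
Proof.
move=> H; split; last by rewrite -(size_nseq k x) size_subseq.
apply/all_pred1P; apply/allP => y /(mem_subseq H).
by rewrite mem_nseq => /andP[_ /eqP ->]; rewrite /= eqxx.
Qed.

Definition ab n := wpow [:: La; Lb] n.

Lemma abS n : ab n.+1 = La :: Lb :: ab n.
Proof. by []. Qed.

Lemma wpow1 x k : wpow [:: x] k = nseq k x.
Proof. by elim: k => [|k IH] //=; rewrite /wpow /= in IH *; rewrite IH. Qed.

Lemma size_ab n : size (ab n) = 2 * n.
Proof. elim: n => [|n IH] //; rewrite abS /= IH; lia. Qed.

Definition P1 n := forall q : word, subseq q (ab n) ->
  [/\ lead Lb q + cnt La q <= n, size q + lead La q <= (2*n).+1
    & lead Lb q + size q <= 2*n].
Definition P2 n := forall q : word, subseq q (Lb :: ab n) ->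
  [/\ lead Lb q + cnt La q <= n.+1, cnt La q <= n,
      size q + lead La q <= (2*n).+1 & lead Lb q + size q <= (2*n).+2].

Lemma P10 : P1 0.
Proof. by move=> q; rewrite subseq0 => /eqP ->. Qed.

Lemma P12 n : P1 n -> P2 n.
Proof.
move=> H q /subseq_consE [->|[[q' [-> /H [H1 H2 H3]]]|/H [H1 H2 H3]]] //=.
  split; simpl in *; lia.
split; lia.
Qed.

Lemma P21 n : P2 n -> P1 n.+1.
Proof.
move=> H q; rewrite abS => /subseq_consE [->|[[q' [-> /H [H1 H2 H3 H4]]]|/H [H1 H2 H3 H4]]] //=.
  split; simpl in *; lia.
split; lia.
Qed.

Lemma P1all n : P1 n.
Proof. elim: n => [|n IH]; [exact: P10 | exact: P21 (P12 IH)]. Qed.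

Lemma pal_rev (p : word) : is_palindrome p -> p = rev p.
Proof.
move=> H; apply: (@eq_from_nth _ La); first by rewrite size_rev.
move=> i Hi; rewrite nth_rev //.
have := allP H i; rewrite mem_iota add0n => /(_ Hi) /eqP; done.
Qed.

Lemma anti_rev (p : word) : is_antipalindrome p -> p = map compl (rev p).
Proof.
move=> H; apply: (@eq_from_nth _ La); first by rewrite size_map size_rev.
move=> i Hi; rewrite (nth_map La) ?size_rev // nth_rev //.
have := allP H i; rewrite mem_iota add0n => /(_ Hi).
by case: (nth La p i); case: (nth La p _).
Qed.

Lemma cnt_compl (s : word) : cnt La (map compl s) = cnt Lb s.
Proof. by elim: s => [|[] s IH] //=; rewrite IH. Qed.

Lemma size_cnt (s : word) : size s = cnt La s + cnt Lb s.
Proof. elim: s => [|[] s IH] //=; rewrite IH /=; lia. Qed.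

Lemma allb_cnt (s : word) : all (pred1 Lb) s -> cnt La s = 0.
Proof. by elim: s => [|y s IH] //= /andP[/eqP -> /IH ->]. Qed.

Lemma anti_bound x1 p2 y d n B : subseq p2 (ab n) ->
  let P := nseq x1 Lb ++ p2 ++ nseq y Lb ++ nseq d La in
  P = map compl (rev P) -> 2 * d <= B -> 2 * (x1 + n) <= B -> size P <= B.
Proof.
move=> /(P1all) [L1 L2 L3] P HP Hd Hx.
have Hc : cnt La P = cnt Lb P by rewrite {1}HP cnt_compl cnt_rev.
have HcA : cnt La P = cnt La p2 + d.
  by rewrite /P !cnt_cat !cnt_nseq /=; lia.
have Hs : size P = 2 * cnt La P by rewrite size_cnt -Hc; lia.
have Hl : d <= lead Lb P.
  by rewrite HP /P !rev_cat !rev_nseq !map_cat map_nseq -!catA /= lead_nseq leq_addr.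
case: (boolP (all (pred1 Lb) p2)) => Hall.
  move: HcA; rewrite (allb_cnt Hall); clearbody P; lia.
move: Hl; rewrite /P lead_nseq lead_cat (negbTE Hall) -/P; clearbody P; lia.
Qed.

Lemma pal_bound x1 (p2 : word) y d n B (P : word) : subseq p2 (ab n) ->
  P = nseq x1 Lb ++ p2 ++ nseq y Lb ++ nseq d La ->
  P = rev P -> n + d <= B -> (2*n).+1 + y <= B -> 2*x1 + 2*n <= B ->
  x1 + n + y <= B -> size P <= B.
Proof.
move=> /P1all [L1 L2 L3] HPd HP h1 h2 h3 h4.
have Hs : size P = x1 + size p2 + y + d by rewrite HPd !size_cat !size_nseq; lia.
have Hr : rev P = nseq d La ++ nseq y Lb ++ rev p2 ++ nseq x1 Lb.
  by rewrite HPd !rev_cat !rev_nseq -!catA.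
case: (posnP d) => Hd0.
  have Hy : y <= lead Lb P by rewrite HP Hr Hd0 /= lead_nseq leq_addr.
  case: (boolP (all (pred1 Lb) p2)) => Hall.
    have := lead_all Hall; lia.
  move: Hy; rewrite {1}HPd lead_nseq lead_cat (negbTE Hall); lia.
have Hd : d <= lead La P by rewrite HP Hr lead_nseq leq_addr.
case: (posnP x1) => Hx0; last first.
  by move: Hd; rewrite {1}HPd -(prednK Hx0) /=; lia.
case: (boolP (all (pred1 La) p2)) => Hall; last first.
  move: Hd; rewrite {1}HPd Hx0 /= lead_cat (negbTE Hall); lia.
have Hl := lead_all Hall.
case: (posnP y) => Hy0; first by lia.
move: Hd; rewrite {1}HPd Hx0 /= lead_cat Hall.
rewrite -(prednK Hy0) /=; lia.
Qed.

Ltac casepair Hin :=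
  move: Hin; rewrite !inE;
  case/orP => [/eqP [? ?]|/orP [/eqP [? ?]|/orP [/eqP [? ?]|/orP [/eqP [? ?]|/orP [/eqP [? ?]|/orP [/eqP [? ?]|/eqP [? ?]]]]]]]; subst.

Theorem lemma4 (n al be : nat) :
  0 < n ->
  (al, be) \in [:: (0, 0); (1, 0); (1, 1); (2, 1); (3, 1); (3, 2); (4, 2)] ->
  3 * n + 1 + (al + be) %/ 3 <= Sd (w_nab n al be).
Proof.
move=> n0 Hin.
have Hw : w_nab n al be = nseq n.+1 Lb ++ ab n ++ nseq (2*n+1+al) Lb ++ nseq (2*n+1+be) La.
  by rewrite /w_nab !wpow1.
have Hsz : size (w_nab n al be) = 7 * n + 3 + al + be.
  rewrite Hw !size_cat !size_nseq size_ab; lia.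
rewrite /Sd.
apply: (big_ind (fun v => 3 * n + 1 + (al + be) %/ 3 <= v)).
- rewrite Hsz; casepair Hin; lia.
- by move=> a b Ha Hb; rewrite leq_min Ha Hb.
move=> t Ht.
have Hsub := mask_subseq t (w_nab n al be).
set P := mask t (w_nab n al be) in Ht Hsub *.
rewrite Hsz.
rewrite Hw in Hsub.
case/subseq_catE: Hsub => p1 [q1 [Hp Hs1 /subseq_catE [p2 [q2 [Hq Hs2 /subseq_catE [p3 [p4 [Hq2 Hs3 Hs4]]]]]]]].
have [E1 S1] := subseq_nseq Hs1.
have [E3 S3] := subseq_nseq Hs3.
have [E4 S4] := subseq_nseq Hs4.
have HP : P = nseq (size p1) Lb ++ p2 ++ nseq (size p3) Lb ++ nseq (size p4) La.
  by rewrite Hp Hq Hq2 -E1 -E3 -E4.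
set B := 7 * n + 3 + al + be - (3 * n + 1 + (al + be) %/ 3).
suff HB : size P <= B by move: HB; rewrite /B; casepair Hin; lia.
case/orP: Ht => H.
  apply: (pal_bound Hs2 HP (pal_rev H)); rewrite /B; casepair Hin; lia.
have HA := anti_rev H; rewrite HP in HA.
have := anti_bound Hs2 HA; rewrite -HP; apply; rewrite /B; casepair Hin; lia.
Qed.
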